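(* Let $J\subset\mathbb{Z}$ and $S\subseteq\mathcal{U}$. Run the Simple algorithm with input $J$, where the elements revealed to it are exactly the elements of $S$, in an arbitrary order. Then the algorithm returns an independent set $P\subseteq S$ such that for every $j\in J$, $$\mathrm{rank}(B_P(j))\ \ge\ \mathrm{rank}\big(B_S(J\setminus\{j\})\cup B_S(j)\big)-\mathrm{rank}\big(B_S(J\setminus\{j\})\big).$$
   Context: $M=(\mathcal{U},\mathcal{I})$ is a matroid; $\mathrm{rank}(X)=\max\{|X'|:X'\subseteq X,X'\in\mathcal{I}\}$ and $\mathrm{span}(X)=\{e\in\mathcal{U}:\mathrm{rank}(X\cup\{e\})=\mathrm{rank}(X)\}$. Every element $e$ has a value $\mathrm{val}(e)\ge 0$; standing assumption: elements of rank $0$ have value $0$, and every element of positive value has value $2^i$ for some $i\in\mathbb{Z}$. For $i\in\mathbb{Z}$ and $X\subseteq\mathcal{U}$, $B_X(i)=\{e\in X:\mathrm{val}(e)=2^i\}$ and for $I\subseteq\mathbb{Z}$, $B_X(I)=\bigcup_{i\in I}B_X(i)$. Logarithms are base 2. Simple algorithm with input $J\subset\mathbb{Z}$: start with $P=\emptyset$; immediately after each element $e$ is revealed, if $\mathrm{val}(e)>0$, $\log\mathrm{val}(e)\in J$ and $e\notin\mathrm{span}(P)$, then add $e$ to $P$. Output $P$. *)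

(* Defs.v *)
From HB Require Import structures.
From mathcomp Require Import all_boot all_order all_algebra.
From mathcomp Require Import boolp.
Set Implicit Arguments. Unset Strict Implicit. Unset Printing Implicit Defensive.
Import Order.TTheory GRing.Theory Num.Theory.

Record matroid (U : finType) := Matroid {
  indep : {set U} -> bool;
  indep0 : indep set0;
  indep_sub : forall A B : {set U}, A \subset B -> indep B -> indep A;
  indep_exch : forall A B : {set U}, indep A -> indep B -> #|A| < #|B| ->
                 exists2 e, e \in B :\: A & indep (e |: A)
}.

Section Defs.
Variables (U : finType) (M : matroid U).

Definition rank (X : {set U}) : nat :=
  \max_(X' : {set U} | (X' \subset X) && indep M X') #|X'|.

Definition span (X : {set U}) : {set U} :=
  [set e | rank (e |: X) == rank X].

Local Open Scope ring_scope.
Variables (R : realFieldType) (val : U -> R).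

Definition B1 (X : {set U}) (i : int) : {set U} :=
  [set e in X | val e == 2%:R ^ i].

Definition Bset (X : {set U}) (I : int -> Prop) : {set U} :=
  [set e in X | `[< exists i : int, I i /\ val e = 2%:R ^ i >]].

Definition simple_alg (J : {pred int}) (s : seq U) : {set U} :=
  foldl (fun P e =>
           if [&& 0 < val e,
                  `[< exists j : int, j \in J /\ val e = 2%:R ^ j >]
                & e \notin span P]
           then e |: P else P) set0 s.

End Defs.

(* Main.v *)
Require Import Defs.
From HB Require Import structures.
From mathcomp Require Import all_boot all_order all_algebra.
From mathcomp Require Import boolp.
Import Order.TTheory GRing.Theory Num.Theory.

Section Mat.
Context {U : finType} (M : matroid U).
Implicit Types X Y B I : {set U}.

Lemma rank_ge I X : indep M I -> I \subset X -> #|I| <= rank M X.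
Proof.
move=> hI hIX; rewrite /rank.
by apply: (leq_bigmax_cond (P := fun X' : {set U} => (X' \subset X) && indep M X') (F := fun X' : {set U} => #|X'|)); rewrite hIX hI.
Qed.

Arguments rank_ge {I X}.

Lemma rank_wit X : exists I, [/\ I \subset X, indep M I & #|I| = rank M X].
Proof.
have h0 : 0 < #|[pred X' : {set U} | (X' \subset X) && indep M X']|.
  by apply/card_gt0P; exists set0; rewrite inE sub0set indep0.
have [I HI E] := eq_bigmax_cond (fun X' : {set U} => #|X'|) h0.
by exists I; move: HI; rewrite inE => /andP[-> ->]; split.
Qed.

Lemma rank_le_card X : rank M X <= #|X|.
Proof. by apply/bigmax_leqP => I /andP[hIX _]; exact: subset_leq_card. Qed.

Lemma rank_mono X Y : X \subset Y -> rank M X <= rank M Y.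
Proof.
move=> hXY; have [I [hIX hI <-]] := rank_wit X.
exact: rank_ge hI (subset_trans hIX hXY).
Qed.

Lemma extend n I X : rank M X - #|I| = n -> indep M I -> I \subset X ->
  exists B, [/\ I \subset B, B \subset X, indep M B & #|B| = rank M X].
Proof.
elim: n I => [|n IH] I hn hI hIX.
  exists I; split => //; apply/eqP; by rewrite eqn_leq rank_ge //= -subn_eq0 hn.
have [K [hKX hK cK]] := rank_wit X.
have hlt : #|I| < #|K| by rewrite cK -subn_gt0 hn.
have [e he heI] := indep_exch hI hK hlt.
move: he; rewrite in_setD => /andP[enI eK].
have e1 : rank M X - #|e |: I| = n by rewrite cardsU1 enI add1n subnS hn.
have e2 : e |: I \subset X by rewrite subUset sub1set hIX (subsetP hKX).
have [B [h1 h2 h3 h4]] := IH (e |: I) e1 heI e2.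
by exists B; split => //; apply: subset_trans h1; apply: subsetUr.
Qed.

Arguments extend {n I X}.

Lemma pick_new B B' : #|B| < #|B'| -> exists2 f, f \in B' & f \notin B.
Proof.
move=> hc; case: (boolP (B' \subset B)) => h.
  by have := subset_leq_card h; rewrite leqNgt hc.
by case/subsetPn: h => f h1 h2; exists f.
Qed.

Lemma basis_aug B X e : B \subset X -> indep M B -> #|B| = rank M X ->
  rank M X < rank M (e |: X) -> indep M (e |: B) /\ e \notin X.
Proof.
move=> sBX iB cB hlt.
have [B'' [sBB'' sB''X iB'' cB'']] :=
  extend (erefl _) iB (subset_trans sBX (subsetUr [set e] X)).
have [f fB'' fB] := @pick_new B B'' ltac:(by rewrite cB cB'').
have ifB : indep M (f |: B).
  by apply: indep_sub iB''; rewrite subUset sub1set fB'' sBB''.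
have cfB : #|f |: B| = (#|B|).+1 by rewrite cardsU1 fB.
have fX : f \notin X.
  apply/negP => fX.
  suff: f |: B \subset X by move/(rank_ge ifB); rewrite cfB -cB ltnn.
  by rewrite subUset sub1set fX sBX.
move: (subsetP sB''X f fB''); rewrite in_setU1 (negbTE fX) orbF => /eqP fe.
by subst f.
Qed.

Arguments basis_aug {B X e}.

Lemma span_indep P e : indep M P -> e \notin Defs.span M P -> indep M (e |: P).
Proof.
move=> iP; rewrite inE => hne.
have cP : #|P| = rank M P by apply/eqP; rewrite eqn_leq rank_le_card rank_ge.
have hlt : rank M P < rank M (e |: P).
  by rewrite ltn_neqAle eq_sym hne rank_mono // subsetUr.
by case: (@basis_aug P P e (subxx P) iP cP hlt).
Qed.

Lemma span_mono X Y e : X \subset Y -> e \in Defs.span M X -> e \in Defs.span M Y.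
Proof.
move=> hXY; rewrite !inE => /eqP hX; rewrite eqn_leq [X in _ && X]rank_mono ?subsetUr // andbT.
rewrite leqNgt; apply/negP => hlt.
have [B [hBX hB cB]] := rank_wit X.
have [B' [h1 h2 h3 h4]] := extend (erefl _) hB (subset_trans hBX hXY).
have [ieB' eY] := basis_aug h2 h3 h4 hlt.
have eB : e \notin B by apply: contra eY => eB; apply: (subsetP hXY); apply: (subsetP hBX).
have ieB : indep M (e |: B) by apply: indep_sub ieB'; apply: setUS.
suff: e |: B \subset e |: X by move/(rank_ge ieB); rewrite cardsU1 eB hX -cB ltnn.
by apply: setUS.
Qed.

Lemma closure X Y : {in Y, forall e, e \in Defs.span M X} -> rank M (X :|: Y) <= rank M X.
Proof.
move=> hY; rewrite leqNgt; apply/negP => hlt.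
have [B [hBX hB cB]] := rank_wit X.
have [B' [h1 h2 h3 h4]] := extend (erefl _) hB (subset_trans hBX (subsetUl X Y)).
have [f fB' fB] := @pick_new B B' ltac:(by rewrite cB h4).
have ifB : indep M (f |: B) by apply: indep_sub h3; rewrite subUset sub1set fB' h1.
have cfB : #|f |: B| = (#|B|).+1 by rewrite cardsU1 fB.
move: (subsetP h2 f fB'); rewrite in_setU => /orP[fX|fY].
  suff: f |: B \subset X by move/(rank_ge ifB); rewrite cfB cB ltnn.
  by rewrite subUset sub1set fX hBX.
have := hY f fY; rewrite inE => /eqP hf.
suff: f |: B \subset f |: X by move/(rank_ge ifB); rewrite cfB hf -cB ltnn.
by apply: setUS.
Qed.

Lemma subadd X Y : rank M (X :|: Y) <= rank M X + rank M Y.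
Proof.
have [I [hI iI <-]] := rank_wit (X :|: Y).
have -> : I = (I :&: X) :|: (I :&: Y) by rewrite -setIUr; apply/esym/setIidPl.
apply: leq_trans (leq_card_setU _ _) _.
apply: leq_add; apply: rank_ge; rewrite ?subsetIr //; apply: indep_sub iI;
  rewrite ?subsetIl //.
Qed.

End Mat.

Section Alg.
Local Open Scope ring_scope.
Context {U : finType} (M : matroid U) {R : realFieldType} (val : U -> R)
  (J : {pred int}).

Definition good x := (0 < val x) && `[< exists j : int, j \in J /\ val x = 2%:R ^ j >].
Definition step (P : {set U}) e :=
  if [&& 0 < val e, `[< exists j : int, j \in J /\ val e = 2%:R ^ j >]
      & e \notin Defs.span M P] then e |: P else P.

Lemma alg_inv t P0 : indep M P0 ->
 [/\ indep M (foldl step P0 t), P0 \subset foldl step P0 t,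
   (forall x, x \in foldl step P0 t -> (x \in P0) || ((x \in t) && good x)) &
   (forall x, x \in t -> good x -> x \in Defs.span M (foldl step P0 t))].
Proof.
elim: t P0 => [|x t IH] P0 iP0 /=.
  by split => // y ->.
set P1 := step P0 x.
have iP1 : indep M P1.
  by rewrite /P1 /step; case: ifP => // /and3P[_ _ h]; exact: span_indep.
have sP01 : P0 \subset P1 by rewrite /P1 /step; case: ifP => _ //; apply: subsetUr.
have [iP sP hP hsp] := IH P1 iP1.
split => //.
- exact: subset_trans sP01 sP.
- move=> y /hP /orP[yP1|/andP[yt gy]]; last by rewrite in_cons yt gy !orbT.
  move: yP1; rewrite /P1 /step; case: ifP => [/and3P[h1 h2 _]|_]; last by move ->.
  by rewrite in_setU1 => /orP[/eqP->|->//]; rewrite in_cons eqxx /good h1 h2 orbT.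
- move=> y; rewrite in_cons => /orP[/eqP->|yt] gy; last exact: hsp.
  move: gy => /andP[g1 g2].
  case E: (x \in Defs.span M P0).
    exact: (@span_mono _ M _ _ x (subset_trans sP01 sP) E).
  have xP : x \in foldl step P1 t.
    by apply: (subsetP sP); rewrite /P1 /step g1 g2 E /= setU11.
  rewrite inE; have -> : x |: foldl step P1 t = foldl step P1 t.
    by apply/setUidPr; rewrite sub1set.
  by [].
Qed.

End Alg.

Local Open Scope ring_scope.

Theorem lemma1 (U : finType) (M : matroid U) (R : realFieldType) (val : U -> R)
  (val_ge0 : forall e, 0 <= val e)
  (val_rank0 : forall e, rank M [set e] = 0%N -> val e = 0)
  (val_pow2 : forall e, 0 < val e -> exists i : int, val e = 2%:R ^ i)
  (J : {pred int}) (S : {set U}) (s : seq U) (Hs : perm_eq s (enum S)) :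
  let P := simple_alg M val J s in
  [/\ indep M P, P \subset S &
      forall j : int, j \in J ->
        (rank M (Bset val S (fun i => i \in J /\ i != j) :|: B1 val S j))%:Z
          - (rank M (Bset val S (fun i => i \in J /\ i != j)))%:Z
        <= (rank M (B1 val P j))%:Z].
Proof.
move=> P.
have [iP _ hP hsp] := alg_inv M val J s set0 (indep0 M).
have EP : foldl (step M val J) set0 s = P by [].
rewrite EP in iP hP hsp.
have memS x : (x \in s) = (x \in S) by rewrite (perm_mem Hs) mem_enum.
split => //.
  by apply/subsetP => x /hP; rewrite in_set0 /= => /andP[xs _]; rewrite -memS.
move=> j jJ.
set A := Bset val S (fun i => i \in J /\ i != j).
set Bj := B1 val S j.
have spanG : {in A :|: Bj, forall e, e \in Defs.span M (A :|: B1 val P j)}.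
  move=> e eG.
  have [eS ge] : e \in S /\ good val J e.
    move: eG; rewrite in_setU /A /Bj /Bset /B1 !inE.
    case/orP => [/andP[eS /asboolP[i [[iJ _] ve]]]|/andP[eS /eqP ve]].
      split => //; rewrite /good ve exprz_gt0 ?ltr0n //=; apply/asboolP; by exists i.
    split => //; rewrite /good ve exprz_gt0 ?ltr0n //=; apply/asboolP; by exists j.
  apply: (@span_mono _ M _ _ e _ (hsp e _ ge)); last by rewrite memS.
  apply/subsetP => x xP.
  have := hP x xP; rewrite in_set0 /= => /andP[xs /andP[_ /asboolP[i [iJ vi]]]].
  case: (eqVneq i j) => [eij|nij].
    by rewrite in_setU; apply/orP; right; rewrite /B1 inE xP vi eij eqxx.
  rewrite in_setU /A /Bset inE -memS xs /=; apply/orP; left; apply/asboolP; by exists i.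
have h1 := leq_trans (@rank_mono _ M _ _ (subsetUr (A :|: B1 val P j) (A :|: Bj))) (@closure _ M _ _ spanG).
have h2 := leq_trans h1 (@subadd _ M A (B1 val P j)).
by rewrite lerBlDr -PoszD lez_nat addnC.
Qed.
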